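(* Fix $N\ge 1$ and $\Delta t>0$. Let $\mathbf{b}_n,\mathbf{b}_{n+1}\in\mathbb{C}^N$ with components $b_{j,n},b_{j,n+1}$, with the convention $b_{0,m}=b_{N+1,m}=0$ for $m\in\{n,n+1\}$, and suppose that $\mathbf{b}_{n+1}$ is an exact solution of the system $$b_{j,n+1}=b_{j,n}+\Delta t\Big(-i\,|b|^2_{j,n+1/2}\,b_{j,n+1/2}+2i\,\overline{b_{j,n+1/2}}\,\big(b_{j+1,n+1/2}^2+b_{j-1,n+1/2}^2\big)\Big),\qquad j=1,\dots,N,$$ where $b_{j,n+1/2}=\tfrac12(b_{j,n}+b_{j,n+1})$ and $|b|^2_{j,n+1/2}=\tfrac12\big(|b_{j,n}|^2+|b_{j,n+1}|^2\big)$. Then $\sum_{j=1}^N|b_{j,n+1}|^2=\sum_{j=1}^N|b_{j,n}|^2$.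
   Context: This is a ''modified midpoint'' discretization of the toy model system $-i\dot b_j=-|b_j|^2b_j+2b_{j-1}^2\bar b_j+2b_{j+1}^2\bar b_j$, $j=1,\dots,N$, with $b_0=b_{N+1}=0$; the conserved quantity is the mass $\mathcal{M}[\mathbf{b}]=\sum_j|b_j|^2$. *)

(* Defs.v *)
From mathcomp Require Import all_boot all_order all_algebra.
From mathcomp Require Export complex.
Set Implicit Arguments. Unset Strict Implicit. Unset Printing Implicit Defensive.
Import Order.TTheory GRing.Theory Num.Theory.
Local Open Scope ring_scope.
Local Open Scope complex_scope.

(* A vector b in C^N, indexed by 'I_N (component j = 1..N is b (j-1)),
   extended by zero: bext b j = b_j for 1 <= j <= N, and b_0 = b_{N+1} = 0. *)
Definition bext (R : rcfType) (N : nat) (b : 'I_N -> R[i]) (j : nat) : R[i] :=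
  match j with
  | 0 => 0
  | j'.+1 => match @insub _ (fun k => (k < N)%N) 'I_N j' with
             | Some k => b k
             | None => 0
             end
  end.

Definition midpoint_step (R : rcfType) (N : nat) (dt : R)
    (bn bn1 : 'I_N -> R[i]) (j : nat) : Prop :=
  let bh := fun k => (bext bn k + bext bn1 k) / 2 in
  let abs2h := (`|bext bn j| ^+ 2 + `|bext bn1 j| ^+ 2) / 2 in
  bext bn1 j = bext bn j + dt%:C *
    (- 'i * abs2h * bh j
     + 2 * 'i * (bh j)^* * ((bh j.+1) ^+ 2 + (bh j.-1) ^+ 2)).

Definition mass (R : rcfType) (N : nat) (b : 'I_N -> R[i]) : R[i] :=
  \sum_(j < N) `|b j| ^+ 2.

(* Main.v *)
Require Import Defs.
From mathcomp Require Import all_boot all_order all_algebra.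
From mathcomp Require Import complex.
From mathcomp Require Import ring lra.
Import Order.TTheory GRing.Theory Num.Theory.
Local Open Scope ring_scope.

Lemma core (K : fieldType) (x xs y ys h hs c F Fs : K) :
  (2 : K) != 0 ->
  y = x + c * F -> ys = xs + c * Fs -> h = (x + y) / 2 -> hs = (xs + ys) / 2 ->
  y * ys - x * xs = c * (h * Fs + F * hs).
Proof.
move=> n2 -> -> -> ->. field. exact n2.
Qed.

Lemma pt (C : numClosedFieldType) (x y hp hm c I : C) :
  c^* = c -> I^* = - I ->
  let h := (x + y) / 2 in let A := (`|x| ^+ 2 + `|y| ^+ 2) / 2 in
  y = x + c * (- I * A * h + 2 * I * h^* * (hp ^+ 2 + hm ^+ 2)) ->
  `|y| ^+ 2 - `|x| ^+ 2 = c * (2 * I) *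
     ((h^* ^+ 2 * hp ^+ 2 - h ^+ 2 * hp^* ^+ 2) - (hm^* ^+ 2 * h ^+ 2 - hm ^+ 2 * h^* ^+ 2)).
Proof.
move=> Hc Hi h A Hy.
have n2 : (2 : C) != 0 by rewrite pnatr_eq0.
have HA : A^* = A by apply/conj_Creal; rewrite rpredM ?rpredD ?rpredX ?normr_real // rpredV realn.
have Hh : h = (x + y) / 2 by [].
have Hhs : h^* = (x^* + y^*) / 2.
  by rewrite Hh rmorphM /= rmorphV ?unitfE //= conjC_nat rmorphD.
clearbody h A.
have Hys := congr1 Num.conj Hy.
rewrite !(rmorphD, rmorphM, rmorphN, rmorphXn) /= in Hys.
rewrite Hc Hi HA ?conjCK ?conjC_nat ?rmorph_nat ?rmorph1 ?opprK in Hys.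
rewrite !normCK (@core C _ _ _ _ _ _ _ _ _ n2 Hy Hys Hh Hhs).
ring.
Qed.

Lemma bextS (R : rcfType) (N : nat) (b : 'I_N -> R[i]) (k : 'I_N) :
  bext b k.+1 = b k.
Proof. by rewrite /= valK. Qed.

Lemma bextN (R : rcfType) (N : nat) (b : 'I_N -> R[i]) : bext b N.+1 = 0.
Proof. by rewrite /= insubF // ltnn. Qed.

Theorem proposition2p2 (R : rcfType) (N : nat) (dt : R)
    (bn bn1 : 'I_N -> R[i]) :
  (1 <= N)%N -> 0 < dt ->
  (forall j : nat, (1 <= j <= N)%N -> midpoint_step dt bn bn1 j) ->
  mass bn1 = mass bn.
Proof.
move=> _ _ H.
pose h j := (bext bn j + bext bn1 j) / 2.
pose w j := (h j)^* ^+ 2 * (h j.+1) ^+ 2 - (h j) ^+ 2 * (h j.+1)^* ^+ 2.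
pose K := (dt%:C)%C * (2 * 'i%C).
have Hj : forall k : 'I_N, `|bn1 k| ^+ 2 - `|bn k| ^+ 2 = K * (w k.+1 - w k).
  move=> k; rewrite -(@bextS R N bn1 k) -(@bextS R N bn k).
  have Hk : (1 <= k.+1 <= N)%N by rewrite ltn_ord.
  have E := H _ Hk; rewrite /midpoint_step in E; cbv beta zeta in E.
  have Hc : (dt%:C%C)^* = dt%:C%C by exact: conjc_real.
  have Hi : ('i%C : R[i])^* = - 'i%C by rewrite complexiE conjCi.
  by rewrite (@pt _ _ _ _ _ _ _ Hc Hi E).
apply/eqP; rewrite -subr_eq0; apply/eqP.
rewrite /mass -sumrB (eq_bigr _ (fun k _ => Hj k)) -mulr_sumr.
rewrite -(big_mkord xpredT (fun k => w k.+1 - w k)) telescope_sumr // .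
have h0 : h 0%N = 0 by rewrite /h [bext bn 0]/= [bext bn1 0]/= addr0 mul0r.
have hN : h N.+1 = 0 by rewrite /h !bextN addr0 mul0r.
have w0 : w 0%N = 0 by rewrite /w h0 rmorph0 !expr0n /= !(mul0r, mulr0) subrr.
have wN : w N = 0 by rewrite /w hN rmorph0 !expr0n /= !(mul0r, mulr0) subrr.
by rewrite w0 wN subrr mulr0.
Qed.
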